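(* Let $k$ be an algebraically closed field of characteristic $0$ and $d\ge3$. For $m\ge1$ let $V_m$ have basis $v_1,\dots,v_m$ and symmetric $d$-linear form $\Theta_d(v_{i_1},\dots,v_{i_d})=1$ if $i_1+\dots+i_d=(d-1)m+1$ and $0$ otherwise, and $\mathcal{L}(m,d)=\{L\in\mathfrak{gl}(V_m):\sum_{i=1}^d\Theta_d(u_1,\dots,L(u_i),\dots,u_d)=0\ \forall u_j\}$. Fix $n\ge1$, let $\psi\in\mathrm{End}_k(V_n)$, $\psi(v_i)=v_{i-1}$ ($v_0=0$), and let $\mathcal{L}(n,d)^\psi$ be $\mathcal{L}(n,d)$ with Lie bracket $[f,g]_\psi=f\psi g-g\psi f$. Let $\iota:V_n\to V_{n+1}$, $\iota(v_i)=v_i$, and $\pi:V_{n+1}\to V_n$, $\pi(v_i)=v_{i-1}$ ($v_0=0$). Then $\rho(f)=\iota\circ f\circ\pi$ defines an injective Lie algebra homomorphism $\rho:\mathcal{L}(n,d)^\psi\to\mathcal{L}(n+1,d)$, where $\mathcal{L}(n+1,d)$ carries the commutator bracket.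
   Context: $\psi$ lies in the center of $(V_n,\Theta_d)$, so $[\cdot,\cdot]_\psi$ is a Lie bracket on $\mathcal{L}(n,d)$. *)

(* Defs.v *)
From HB Require Import structures.
From mathcomp Require Import all_boot all_order all_algebra.
Set Implicit Arguments. Unset Strict Implicit. Unset Printing Implicit Defensive.
Import GRing.Theory.
Local Open Scope ring_scope.

(* V_m = 'cV[k]_m with basis v_1..v_m = delta columns; basis index i (1-based)
   corresponds to ordinal i-1.  Endomorphisms are m x m matrices acting on
   column vectors by left multiplication; composition f o g = f *m g. *)

(* Theta_d on V_m, extended multilinearly: Theta(v_{i_1},...,v_{i_d}) = 1 iff
   i_1+...+i_d = (d-1)m+1 (1-based), i.e. sum of 0-based indices = (d-1)(m-1). *)
Definition Theta (k : fieldType) (m d : nat) (u : 'I_d -> 'cV[k]_m) : k :=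
  \sum_(t : {ffun 'I_d -> 'I_m} | (\sum_(j < d) (t j : nat))%N == ((d - 1) * (m - 1))%N)
     \prod_(j < d) u j (t j) 0.

Definition inLmd (k : fieldType) (m d : nat) (L : 'M[k]_m) : Prop :=
  forall u : 'I_d -> 'cV[k]_m,
    \sum_(i < d) Theta (fun j => if j == i then L *m u j else u j) = 0.

Definition psi (k : fieldType) (n : nat) : 'M[k]_n :=
  \matrix_(r < n, c < n) (((r : nat).+1 == c)%:R).

Definition iota (k : fieldType) (n : nat) : 'M[k]_(n.+1, n) :=
  \matrix_(r < n.+1, c < n) (((r : nat) == c)%:R).

Definition pi (k : fieldType) (n : nat) : 'M[k]_(n, n.+1) :=
  \matrix_(r < n, c < n.+1) (((r : nat).+1 == c)%:R).

Definition bracket_psi (k : fieldType) (n : nat) (f g : 'M[k]_n) : 'M[k]_n :=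
  f *m psi k n *m g - g *m psi k n *m f.

Definition rho (k : fieldType) (n : nat) (f : 'M[k]_n) : 'M[k]_n.+1 :=
  iota k n *m f *m pi k n.

(* Main.v *)
Require Import Defs.
From HB Require Import structures.
From mathcomp Require Import all_boot all_order all_algebra zify.
Import GRing.Theory.
Set Implicit Arguments. Unset Strict Implicit.
Local Open Scope ring_scope.
Lemma sum_delta (R : pzRingType) m (j0 : 'I_m) (e : nat) (F : 'I_m -> R) :
  e = j0 -> \sum_(j < m) ((e == j)%:R * F j) = F j0.
Proof.
move=> ->; rewrite (bigD1 j0) //= eqxx mul1r big1 ?addr0 // => j hj.
by rewrite (_ : (j0 == j :> nat) = false) ?mul0r //; apply/negbTE; rewrite eq_sym.
Qed.

Lemma sum_delta0 (R : pzRingType) m (e : nat) (F : 'I_m -> R) :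
  (m <= e)%N -> \sum_(j < m) ((e == j)%:R * F j) = 0.
Proof.
move=> he; rewrite big1 // => j _.
by rewrite (_ : (e == j :> nat) = false) ?mul0r //; apply/negbTE; rewrite neq_ltn (leq_trans (ltn_ord j) he) orbT.
Qed.

Lemma iotaM (k : fieldType) n m (M : 'M[k]_(n, m)) r c :
  (Defs.iota k n *m M) r c = \sum_(j < n) (((r : nat) == j)%:R * M j c).
Proof. by rewrite mxE; apply: eq_bigr => j _; rewrite mxE. Qed.

Lemma piM (k : fieldType) n m (M : 'M[k]_(n.+1, m)) r c :
  (Defs.pi k n *m M) r c = \sum_(j < n.+1) (((r : nat).+1 == j)%:R * M j c).
Proof. by rewrite mxE; apply: eq_bigr => j _; rewrite mxE. Qed.

Definition upf d n (i : 'I_d) (t : {ffun 'I_d -> 'I_n.+1}) : {ffun 'I_d -> 'I_n.+2} :=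
  [ffun j => if j == i then widen_ord (leqnSn _) (t j) else lift ord0 (t j)].
Definition downf d n (i : 'I_d) (t : {ffun 'I_d -> 'I_n.+2}) : {ffun 'I_d -> 'I_n.+1} :=
  [ffun j => inord (if j == i then (t j : nat) else (t j).-1)].

Lemma upfE d n i t j : (@upf d n i t j : nat) = if j == i then (t j : nat) else (t j).+1.
Proof. by rewrite ffunE; case: (j == i). Qed.

Lemma sum_ind d (i : 'I_d) : (\sum_(j < d) (j == i : nat))%N = 1%N.
Proof. by rewrite (bigD1 i) //= eqxx big1 // => j /negbTE ->. Qed.

Lemma theta_shift (k : fieldType) d n (f : 'M[k]_n.+1) (u : 'I_d -> 'cV[k]_n.+2) (i : 'I_d) :
  Theta (fun j => if j == i then rho f *m u j else u j) =
  Theta (fun j => if j == i then f *m (Defs.pi k n.+1 *m u j) else Defs.pi k n.+1 *m u j).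
Proof.
have hd : (0 < d)%N := leq_ltn_trans (leq0n _) (ltn_ord i).
case: d hd i u => // d _ i u.
rewrite /Theta.
set Q := fun t : {ffun 'I_d.+1 -> 'I_n.+2} =>
   (t i < n.+1)%N && [forall j, (j != i) ==> (0 < t j)%N].
rewrite (bigID Q) /= [X in _ + X]big1 ?addr0; last first.
  move=> t /andP[/eqP Ht]; rewrite /Q negb_and.
  case: ltnP => [hti|hti] /=.
    move=> /forallPn [j]; rewrite negb_imply lt0n negbK => /andP[hji /eqP htj].
    exfalso.
    have hb : (\sum_(j' < d.+1) ((t j' : nat) + (j' == i) + n.+1 * (j' == j)) <= \sum_(j' < d.+1) n.+1)%N.
      apply: leq_sum => j' _.
      case: (eqVneq j' i) => [->|hi]; first by rewrite eq_sym (negbTE hji) /= muln0; lia.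
      case: (eqVneq j' j) => [->|hj]; first by rewrite htj /=; lia.
      rewrite /= muln0; have := ltn_ord (t j'); lia.
    move: hb; rewrite !big_split /= -big_distrr /= sum_ind sum_ind Ht sum_nat_const card_ord.
    rewrite subn1 /=; lia.
  move=> _; rewrite (bigD1 i) //= eqxx.
  by rewrite /rho -!mulmxA iotaM sum_delta0 ?mul0r.
rewrite (reindex_onto (@upf _ _ i) (@downf _ _ i)) /=; last first.
  move=> t /andP[_ /andP[hti /forallP hj]]; apply/ffunP => j; apply/val_inj.
  rewrite /= upfE ffunE; case: (eqVneq j i) => [->|hji] /=; first by rewrite inordK.
  have := hj j; rewrite hji /= => hp.
  by rewrite inordK ?prednK //; have := ltn_ord (t j); lia.
apply: eq_big => [t|t _].
  have -> : Q (upf i t).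
    rewrite /Q upfE eqxx ltn_ord /=; apply/forallP => j; apply/implyP => hj.
    by rewrite upfE (negbTE hj).
  have -> : downf i (upf i t) == t.
    apply/eqP/ffunP => j; apply/val_inj; rewrite /= ffunE upfE.
    by case: (j == i); rewrite /= inordK.
  have hs : (\sum_(j < d.+1) upf i t j + 1 = \sum_(j < d.+1) t j + d.+1)%N.
    have e1 : (\sum_(j < d.+1) (t j + 1) = \sum_(j < d.+1) t j + d.+1)%N.
      by rewrite big_split /= sum_nat_const card_ord muln1.
    rewrite -(sum_ind i) -big_split -e1 /=.
    by apply: eq_bigr => j _; rewrite upfE; case: (j == i); rewrite /= ?addn0 ?addn1.
  rewrite !andbT !subn1 /= mulnS.
  by rewrite -(eqn_add2r 1) hs addn1 addnS eqSS [(d + _)%N]addnC eqn_add2r.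
apply: eq_bigr => j _; case: (eqVneq j i) => [->|hji].
  rewrite /rho -!mulmxA iotaM (@sum_delta _ _ (t i)) //.
  by rewrite /upf ffunE eqxx.
rewrite /upf ffunE (negbTE hji) piM (@sum_delta _ _ (lift ord0 (t j))) //.
Qed.

Lemma pi_iota (k : fieldType) n : Defs.pi k n *m Defs.iota k n = psi k n.
Proof.
apply/matrixP => r c; rewrite piM (@sum_delta _ _ (lift ord0 r)) //.
by rewrite !mxE.
Qed.

Lemma iotaT_iota (k : fieldType) n : (Defs.iota k n)^T *m Defs.iota k n = 1%:M.
Proof.
apply/matrixP => r c; rewrite mxE.
rewrite (eq_bigr (fun j : 'I_n.+1 => ((r : nat) == j)%:R * Defs.iota k n j c)); last first.
  by move=> j _; rewrite !mxE eq_sym.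
by rewrite (@sum_delta _ _ (widen_ord (leqnSn _) r)) // !mxE.
Qed.

Lemma pi_piT (k : fieldType) n : Defs.pi k n *m (Defs.pi k n)^T = 1%:M.
Proof.
apply/matrixP => r c; rewrite mxE.
rewrite (eq_bigr (fun j : 'I_n.+1 => ((r : nat).+1 == j)%:R * Defs.pi k n c j)); last first.
  by move=> j _; rewrite !mxE.
by rewrite (@sum_delta _ _ (lift ord0 r)) // !mxE /= eqSS eq_sym.
Qed.

Lemma rho_inv (k : fieldType) n (f : 'M[k]_n) :
  (Defs.iota k n)^T *m rho f *m (Defs.pi k n)^T = f.
Proof.
by rewrite /rho !mulmxA iotaT_iota mul1mx -mulmxA pi_piT mulmx1.
Qed.

Lemma rhoZD (k : fieldType) n (a : k) (f g : 'M[k]_n) :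
  rho (a *: f + g) = a *: rho f + rho g.
Proof.
rewrite /rho mulmxDr mulmxDl; congr (_ + _).
by rewrite -!mulmxA -scalemxAl -scalemxAr.
Qed.

Theorem proposition3p8 (k : closedFieldType) (d n : nat) :
  [pchar k] =i pred0 -> (3 <= d)%N -> (1 <= n)%N ->
  [/\ (forall f : 'M[k]_n, inLmd d f -> inLmd d (rho f)),
      (forall (a : k) (f g : 'M[k]_n), inLmd d f -> inLmd d g ->
          rho (a *: f + g) = a *: rho f + rho g),
      (forall f g : 'M[k]_n, inLmd d f -> inLmd d g ->
          rho (bracket_psi f g) = rho f *m rho g - rho g *m rho f)
    & (forall f g : 'M[k]_n, inLmd d f -> inLmd d g -> rho f = rho g -> f = g)].
Proof.
move=> _ _; case: n => [//|n] _.
split.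
- move=> f Hf u; rewrite (eq_bigr _ (fun i _ => theta_shift f u i)).
  exact: (Hf (fun j => Defs.pi k n.+1 *m u j)).
- by move=> a f g _ _; apply: rhoZD.
- move=> f g _ _; rewrite /bracket_psi /rho mulmxBr mulmxBl -pi_iota !mulmxA.
  done.
- by move=> f g _ _ h; rewrite -(rho_inv f) h rho_inv.
Qed.
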